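(* Let $k$ divide $n$ with $n/k>1$. Then the positive semidefinite biquadratic form $B_{\Phi^{(n,k)}}$ decomposes as a sum of positive semidefinite biquadratic forms: \[ B_{\Phi^{(n,k)}}=\sum_{d=1}^{k} F_{\sigma_k,d}+\sum_{\substack{1\le i<j\le n \\ i \not\equiv j \pmod{k}}}\left( x_i y_i -x_j y_j \right)^2 , \] where \[ F_{\sigma_k,d}=\left( \frac{n}{k}-2 \right)\sum_{i \equiv d \pmod{k}} x_i^2 y_i^2 -2 \sum_{\substack{1\le i<j\le n \\ i \equiv j\equiv d \pmod{k}}} x_iy_ix_jy_j +\sum_{i \equiv d \pmod{k}} x_{\sigma_k(i)}^2y_i^2 \qquad (d=1,\dots,k). \] Furthermore, each $F_{\sigma_k,d}$ is positive semidefinite and, after renaming $x_{d+ik}$ as $x_{i+1}$ and $y_{d+ik}$ as $y_{i+1}$, coincides with the biquadratic form $B_{\Phi^{(n/k,1)}}$.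
   Context: For $n\ge 3$ and $k=1,\dots,n-1$, let $\sigma_k:\{1,\dots,n\}\to\{1,\dots,n\}$ be the permutation $\sigma_k(i)=i+k \bmod n$. The Qi–Hou map $\Phi^{(n,k)}:M_n\to M_n$ is defined by $\Phi^{(n,k)}([a_{ij}])=\mathrm{diag}(b_1,\dots,b_n)-[a_{ij}]$ with $b_i=(n-1)a_{ii}+a_{\sigma_k(i),\sigma_k(i)}$; it is a positive linear map. Its associated biquadratic form, for $x=(x_1,\dots,x_n)^{\rm t},y=(y_1,\dots,y_n)^{\rm t}\in\mathbb R^n$, is \[ B_{\Phi^{(n,k)}}(x:y)=y^{\rm t}\,\Phi^{(n,k)}(xx^{\rm t})\,y=(n-2)\sum_{i=1}^n x_i^2 y_i^2+\sum_{i=1}^n x_{\sigma_k(i)}^2 y_i^2-2\sum_{1\le i<j\le n}x_iy_ix_jy_j , \] which is positive semidefinite since $\Phi^{(n,k)}$ is positive. (In particular $B_{\Phi^{(n/k,1)}}$ is the analogous form in $n/k$ pairs of variables with the cyclic shift $\sigma_1(j)=j+1 \bmod n/k$.) *)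

(* Defs.v *)
(* real scalars R : realType. Indices are 0-based ('I_n). *)
From HB Require Import structures.
From mathcomp Require Import all_boot all_order all_algebra.
From mathcomp Require Import reals.
Set Implicit Arguments. Unset Strict Implicit. Unset Printing Implicit Defensive.
Import Order.TTheory GRing.Theory Num.Theory.
Local Open Scope ring_scope.

Definition sigma (n k : nat) (i : 'I_n) : 'I_n :=
  Ordinal (ltn_pmod (i + k) (leq_ltn_trans (leq0n i) (ltn_ord i))).

Definition QiHou {R : realType} (n k : nat) (A : 'M[R]_n) : 'M[R]_n :=
  diag_mx (\row_(i < n) ((n.-1)%:R * A i i + A (sigma k i) (sigma k i))) - A.

Definition Bform {R : realType} (n k : nat) (x y : 'cV[R]_n) : R :=
  ((y^T *m QiHou k (x *m x^T) *m y) 0 0).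

(* F_{sigma_k,d}, with d given 0-based (residue d in 0..k-1, i.e. paper's d+1) *)
Definition Fform {R : realType} (n k d : nat) (x y : 'cV[R]_n) : R :=
  ((n %/ k)%N%:R - 2) * (\sum_(i < n | (i %% k == d)%N) x i 0 ^+ 2 * y i 0 ^+ 2)
  - 2 * (\sum_(i < n) \sum_(j < n | [&& (i < j)%N, (i %% k == d)%N & (j %% k == d)%N])
            x i 0 * y i 0 * x j 0 * y j 0)
  + \sum_(i < n | (i %% k == d)%N) x (sigma k i) 0 ^+ 2 * y i 0 ^+ 2.

(* entry of a column vector at a natural-number index (0 if out of range) *)
Definition vget {R : realType} (n : nat) (x : 'cV[R]_n) (i : nat) : R :=
  match insub i with Some j => x j 0 | None => 0 end.

Definition subvec {R : realType} (n k d : nat) (x : 'cV[R]_n) : 'cV[R]_(n %/ k) :=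
  \col_(i < n %/ k) vget x (d + i * k)%N.

(* Main.v *)
Require Import Defs.
Set Warnings "-notation-overridden,-ambiguous-paths".
From HB Require Import structures.
From mathcomp Require Import all_boot all_order all_algebra.
From mathcomp Require Import reals.
From mathcomp Require Import ring lra zify.
Import Order.TTheory GRing.Theory Num.Theory.
Local Open Scope ring_scope.
Lemma key (R : realFieldType) (I : finType) (s : I -> I) (t : I -> R) :
  injective s -> (1 < #|I|)%N -> (forall i, 0 <= t i) ->
  \sum_i t i / ((#|I|.-1)%:R * t i + t (s i)) <= 1.
Proof.
move=> sinj cardI t0.
set N := #|I|.-1. set c : R := N%:R.
have cpos : 0 < c by rewrite ltr0n /N; lia.
have [/existsP[j /eqP tj]|] := boolP [exists j, t j == 0].
  rewrite (bigD1 j) //= tj mul0r add0r.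
  apply: (@le_trans _ _ (\sum_(i | i != j) c^-1)).
    apply: ler_sum => i _.
    have [->|tnz] := eqVneq (t i) 0; first by rewrite mul0r invr_ge0 ltW.
    have tpos : 0 < t i by rewrite lt_def tnz t0.
    rewrite ler_pdivrMr; last by rewrite ltr_wpDr // mulr_gt0.
    rewrite mulrDr mulrA mulVf ?gt_eqF // mul1r. by rewrite lerDl mulr_ge0 // ?invr_ge0 ltW.
  by rewrite sumr_const cardC1 -/N -mulr_natr mulVf ?gt_eqF.
rewrite negb_exists => /forallP tnz.
have tpos i : 0 < t i by rewrite lt_def tnz t0.
pose D i := c * t i + t (s i).
have Dpos i : 0 < D i by rewrite /D addr_gt0 // mulr_gt0.
pose sv i := t (s i) / D i.
have svpos i : 0 < sv i by rewrite divr_gt0.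
have Hc i : 1 - sv i = c * (t i / D i).
  by rewrite /sv -(divff (lt0r_neq0 (Dpos i))) -mulrBl /D addrK mulrA.
have HM : #|I| = N.+1 by rewrite /N; lia.
have Hsum : 1 <= \sum_i sv i.
  rewrite leNgt; apply/negP => Hlt.
  set P := \prod_i sv i.
  have Ppos : 0 < P by rewrite prodr_gt0.
  have HPs : P = \prod_i (t i / D i).
    rewrite /P /sv !prodf_div; congr (_ / _).
    by rewrite [RHS](reindex_inj sinj).
  have H1m : \prod_i (1 - sv i) = c ^+ #|I| * P.
    by rewrite (eq_bigr _ (fun i _ => Hc i)) big_split /= prodr_const HPs.
  have Hi i : c ^+ N * P < (1 - sv i) ^+ N * sv i.
    have HP : P = sv i * \prod_(j | j != i) sv j by rewrite /P (bigD1 i).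
    have HS : \sum_j sv j = sv i + \sum_(j | j != i) sv j by rewrite (bigD1 i).
    have Sge0 : 0 <= \sum_(j | j != i) sv j by rewrite sumr_ge0 // => j _; rewrite ltW.
    have := @leif_AGM R I (predC1 i) sv.
    rewrite cardC1 -/N => /(_ (fun j _ => ltW (svpos j))) /Order.le_of_leif AG.
    have AG' : c ^+ N * \prod_(j | j != i) sv j <= (\sum_(j | j != i) sv j) ^+ N.
      rewrite -(@ler_pM2l _ (c^-1 ^+ N)); last by rewrite exprn_gt0 ?invr_gt0.
      rewrite mulrA -exprMn mulVf ?gt_eqF // expr1n mul1r mulrC -exprMn mulrC.
      by move: AG; rewrite mulrC.
    have Hlt2 : (\sum_(j | j != i) sv j) ^+ N < (1 - sv i) ^+ N.
      rewrite ltrXn2r //; first by rewrite /N; lia.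
      move: Hlt; rewrite HS; lra.
    rewrite HP mulrCA [X in _ < X]mulrC ltr_pM2l //.
    exact: le_lt_trans AG' Hlt2.
  have : \prod_(i : I) (c ^+ N * P) < \prod_i ((1 - sv i) ^+ N * sv i).
    apply: ltr_prod.
      by apply/hasP; exists (enum_default (Ordinal (ltnW cardI))); rewrite ?mem_index_enum.
    by move=> i _; rewrite Hi andbT mulr_ge0 ?exprn_ge0 ?ltW.
  rewrite prodr_const big_split /= prodrXl H1m -/P HM.
  rewrite !exprMn -!exprM mulnC -mulrA -exprSr ltxx //.
rewrite (eq_bigr (fun i => c^-1 * (1 - sv i))); last first.
  by move=> i _; rewrite Hc mulKf ?lt0r_neq0.
rewrite -mulr_sumr sumrB sumr_const mulrC ler_pdivrMr // mul1r.
rewrite -[#|_|]/(#|I|) HM -natr1 -/c; lra.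
Qed.

Lemma BformE (R : realType) n k (x y : 'cV[R]_n) :
  Bform k x y = \sum_i ((n.-1)%:R * x i 0 ^+ 2 + x (sigma k i) 0 ^+ 2) * y i 0 ^+ 2
                - (\sum_i x i 0 * y i 0) ^+ 2.
Proof.
rewrite /Bform /QiHou mulmxBr mulmxBl mxE mul_mx_diag [X in _ + X]mxE.
congr (_ - _).
  rewrite mxE; apply: eq_bigr => i _; rewrite !mxE !big_ord1 !mxE.
  ring.
rewrite !mulmxA -mulmxA mxE big_ord1 !mxE.
rewrite expr2; congr (_ * _); apply: eq_bigr => i _; rewrite !mxE mulrC //.
Qed.

Lemma sigma_inj n k : injective (@sigma n k).
Proof.
move=> i j /(congr1 val) /= /eqP; rewrite eqn_modDr !modn_small // => /eqP.
exact: val_inj.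
Qed.

Lemma CS (R : realFieldType) (I : finType) (a w E : I -> R) :
  (forall i, 0 <= w i) -> (forall i, 0 <= E i) -> (forall i, a i ^+ 2 <= w i * E i) ->
  (\sum_i a i) ^+ 2 <= (\sum_i w i) * (\sum_i E i).
Proof.
move=> w0 E0 Ha.
have H i j : 2 * (a i * a j) <= w i * E j + w j * E i.
  have h : (a i * a j) ^+ 2 <= (w i * E j) * (w j * E i).
    have -> : w i * E j * (w j * E i) = w i * E i * (w j * E j) by ring.
    by rewrite exprMn; apply: ler_pM; rewrite ?sqr_ge0 ?Ha.
  have p0 : 0 <= w i * E j by rewrite mulr_ge0.
  have q0 : 0 <= w j * E i by rewrite mulr_ge0.
  move: h p0 q0; generalize (a i * a j) (w i * E j) (w j * E i) => c p q h p0 q0.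
  rewrite leNgt; apply/negP => H.
  have : (p + q) ^+ 2 < (2 * c) ^+ 2 by rewrite ltrXn2r // addr_ge0.
  have := sqr_ge0 (p - q).
  nra.
have S : \sum_i \sum_j 2 * (a i * a j) <= \sum_i \sum_j (w i * E j + w j * E i).
  by apply: ler_sum => i _; apply: ler_sum => j _; exact: H i j.
move: S; rewrite [X in _ <= X](eq_bigr (fun i => \sum_j w i * E j + \sum_j w j * E i)); last first.
  by move=> i _; rewrite big_split.
rewrite big_split /= [X in _ <= _ + X]exchange_big /=.
have E1 : (\sum_i a i) ^+ 2 = \sum_i \sum_j a i * a j.
  by rewrite expr2 mulr_suml; apply: eq_bigr => i _; rewrite mulr_sumr.
have E2 : (\sum_i w i) * (\sum_i E i) = \sum_i \sum_j w i * E j.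
  by rewrite mulr_suml; apply: eq_bigr => i _; rewrite mulr_sumr.
have E3 : \sum_i \sum_j 2 * (a i * a j) = 2 * \sum_i \sum_j a i * a j.
  by rewrite mulr_sumr; apply: eq_bigr => i _; rewrite mulr_sumr.
rewrite E1 E2 E3; lra.
Qed.

Lemma Bform1_ge0 (R : realType) m (x y : 'cV[R]_m) : (1 < m)%N -> 0 <= Bform 1 x y.
Proof.
move=> m1; rewrite BformE subr_ge0.
set c : R := (m.-1)%:R.
have cpos : 0 < c by rewrite ltr0n; lia.
pose D i := c * x i 0 ^+ 2 + x (sigma 1 i) 0 ^+ 2.
have D0 i : 0 <= D i by rewrite addr_ge0 ?sqr_ge0 // mulr_ge0 ?sqr_ge0 // ltW.
have Hk := @key R _ (@sigma m 1) (fun i => x i 0 ^+ 2) (@sigma_inj m 1).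
rewrite card_ord in Hk; have Hk2 := Hk m1 (fun i => sqr_ge0 _).
apply: le_trans (@CS R _ (fun i => x i 0 * y i 0) (fun i => x i 0 ^+ 2 / D i) (fun i => D i * y i 0 ^+ 2) _ _ _) _.
- by move=> i; rewrite divr_ge0 ?sqr_ge0.
- by move=> i; rewrite mulr_ge0 ?sqr_ge0.
- move=> i /=; have [Dz|Dnz] := eqVneq (D i) 0.
    have : x i 0 ^+ 2 = 0.
      have h1 := sqr_ge0 (x (sigma 1 i) 0).
      have h2 : 0 <= c * x i 0 ^+ 2 by rewrite mulr_ge0 ?sqr_ge0 ?ltW.
      have cu : c * x i 0 ^+ 2 = 0 by move: Dz; rewrite /D; lra.
      by move/eqP: cu; rewrite mulf_eq0 gt_eqF //= => /eqP.
    by move=> x0; rewrite exprMn x0 !mul0r.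
  by rewrite mulrA divfK // exprMn.
- rewrite ler_piMl ?sumr_ge0 // => i _; rewrite mulr_ge0 ?sqr_ge0 //.
Qed.


Lemma TRI {R : realType} n (h : 'I_n -> 'I_n -> R) :
  \sum_i \sum_j h i j = \sum_(i < n) \sum_(j < n | (i < j)%N) h i j
                       + \sum_(i < n) \sum_(j < n | (i < j)%N) h j i + \sum_i h i i.
Proof.
have E (i : 'I_n) : \sum_j h i j = \sum_(j < n | (i < j)%N) h i j + \sum_(j < n | (j < i)%N) h i j + h i i.
  rewrite (bigID (fun j : 'I_n => (i < j)%N)) /= [X in _ + X](bigD1 i) ?ltnn //=.
  rewrite [h i i + _]addrC addrA; congr (_ + _ + _).
  apply: eq_bigl => j; rewrite -(inj_eq val_inj) /=.
  by case: ltngtP.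
rewrite (eq_bigr _ (fun i _ => E i)) !big_split /=; congr (_ + _ + _).
rewrite (eq_bigr (fun i : 'I_n => \sum_(j < n) if (j < i)%N then h i j else 0)); last by move=> i _; rewrite big_mkcond.
rewrite exchange_big; apply: eq_bigr => i _; by rewrite [RHS]big_mkcond.
Qed.

Lemma SYM {R : realType} n (P : pred 'I_n) (g : 'I_n -> 'I_n -> R) :
  (forall i j, g i j = g j i) ->
  2 * \sum_(i < n) \sum_(j < n | [&& (i < j)%N, P i & P j]) g i j + \sum_(i | P i) g i i
  = \sum_(i | P i) \sum_(j | P j) g i j.
Proof.
move=> gs.
pose h i j := if P i && P j then g i j else 0.
have T := TRI _ h.
have E1 : \sum_(i < n) \sum_(j < n | (i < j)%N) h i j
   = \sum_(i < n) \sum_(j < n | [&& (i < j)%N, P i & P j]) g i j.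
  apply: eq_bigr => i _; rewrite big_mkcond [RHS]big_mkcond; apply: eq_bigr => j _.
  by rewrite /h; case: (i < j)%N; case: (P i); case: (P j).
have E2 : \sum_(i < n) \sum_(j < n | (i < j)%N) h j i
   = \sum_(i < n) \sum_(j < n | [&& (i < j)%N, P i & P j]) g i j.
  apply: eq_bigr => i _; rewrite big_mkcond [RHS]big_mkcond; apply: eq_bigr => j _.
  by rewrite /h gs; case: (i < j)%N; case: (P i); case: (P j).
have E3 : \sum_i h i i = \sum_(i | P i) g i i.
  by rewrite [RHS]big_mkcond; apply: eq_bigr => i _; rewrite /h andbb.
have E4 : \sum_i \sum_j h i j = \sum_(i | P i) \sum_(j | P j) g i j.
  rewrite [RHS]big_mkcond; apply: eq_bigr => i _; rewrite /h.
  case: (P i) => /=; first by rewrite [RHS]big_mkcond.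
  by rewrite big1.
by rewrite -E4 T E1 E2 E3 mulr2n mulrDl mul1r.
Qed.

Lemma PAIR {R : realType} n (P : pred 'I_n) (a : 'I_n -> R) :
  \sum_(i < n) \sum_(j < n | [&& (i < j)%N, P i & P j]) (a i - a j) ^+ 2
  = (\sum_(i | P i) (1 : R)) * \sum_(i | P i) a i ^+ 2 - (\sum_(i | P i) a i) ^+ 2.
Proof.
have gs : forall i j, (a i - a j) ^+ 2 = (a j - a i) ^+ 2.
  by move=> i j; rewrite -sqrrN opprB.
have := @SYM R n P (fun i j => (a i - a j) ^+ 2) gs.
rewrite [X in _ + X = _]big1 ?addr0; last by move=> i _; rewrite subrr expr0n.
set c := \sum_(i | P i) (1 : R).
set S2 := \sum_(i | P i) a i ^+ 2.
set A := \sum_(i | P i) a i.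
have In i : \sum_(j | P j) (a i - a j) ^+ 2 = a i ^+ 2 * c - 2 * a i * A + S2.
  rewrite (eq_bigr (fun j => a i ^+ 2 * 1 + (- (2 * a i * a j)) + a j ^+ 2)); last by move=> j _; ring.
  by rewrite !big_split /= sumrN -!mulr_sumr.
rewrite (eq_bigr _ (fun i _ => In i)).
rewrite !big_split /= sumrN -[\sum_(i | P i) a i ^+ 2 * c]mulr_suml.
rewrite -[\sum_(i | P i) (2 * a i * A)]mulr_suml -mulr_sumr.
rewrite (_ : \sum_(i | P i) S2 = c * S2); last by rewrite /c mulr_suml; apply: eq_bigr => i _; rewrite mul1r.
rewrite -/S2 -/A => H.
rewrite expr2; nra.
Qed.

Lemma CROSS {R : realType} n (P : pred 'I_n) (a : 'I_n -> R) :
  2 * \sum_(i < n) \sum_(j < n | [&& (i < j)%N, P i & P j]) (a i * a j)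
  = (\sum_(i | P i) a i) ^+ 2 - \sum_(i | P i) a i ^+ 2.
Proof.
have := @SYM R n P (fun i j => a i * a j) (fun i j => mulrC _ _).
rewrite (eq_bigr (fun i => a i ^+ 2) (fun i _ => esym (expr2 _))) => H.
have E : \sum_(i | P i) \sum_(j | P j) a i * a j = (\sum_(i | P i) a i) ^+ 2.
  by rewrite expr2 mulr_suml; apply: eq_bigr => i _; rewrite mulr_sumr.
rewrite E in H; lra.
Qed.

Lemma FformE {R : realType} n k d (x y : 'cV[R]_n) :
  Fform k d x y = ((n %/ k)%N%:R - 1) * \sum_(i < n | (i %% k == d)%N) (x i 0 * y i 0) ^+ 2
     - (\sum_(i < n | (i %% k == d)%N) x i 0 * y i 0) ^+ 2
     + \sum_(i < n | (i %% k == d)%N) x (sigma k i) 0 ^+ 2 * y i 0 ^+ 2.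
Proof.
rewrite /Fform.
have := @CROSS R n (fun i : 'I_n => (i %% k == d)%N) (fun i => x i 0 * y i 0).
rewrite (eq_bigr (fun i : 'I_n => \sum_(j < n | [&& (i < j)%N, (i %% k == d)%N & (j %% k == d)%N])
   x i 0 * y i 0 * x j 0 * y j 0)); last by move=> i _; apply: eq_bigr => j _; rewrite !mulrA.
move=> ->.
rewrite (eq_bigr (fun i : 'I_n => (x i 0 * y i 0) ^+ 2)); last by move=> i _; rewrite exprMn.
set S := \sum_(i < n | _) (x i 0 * y i 0) ^+ 2.
ring.
Qed.

Lemma vgetE {R : realType} n (x : 'cV[R]_n) (i : 'I_n) : vget x i = x i 0.
Proof. by rewrite /vget valK. Qed.

Lemma SEL {R : realType} k (kpos : (0 < k)%N) (i : nat) (G : R) :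
  \sum_(d < k) (if (i %% k == d)%N then G else 0) = G.
Proof.
rewrite (bigD1 (Ordinal (ltn_pmod i kpos))) //= eqxx big1 ?addr0 // => d.
move=> hd; case: eqP => // E; move: hd; by rewrite -(inj_eq val_inj) /= E eqxx.
Qed.

Lemma PART {R : realType} n k (kpos : (0 < k)%N) (f : 'I_n -> R) :
  \sum_(d < k) \sum_(i < n | (i %% k == d)%N) f i = \sum_i f i.
Proof.
rewrite (eq_bigr (fun d : 'I_k => \sum_(i < n) if (i %% k == d)%N then f i else 0)); last first.
  by move=> d _; rewrite big_mkcond.
rewrite exchange_big; apply: eq_bigr => i _; exact: SEL.
Qed.

Lemma reidx {R : realType} m k d (F : nat -> R) : (d < k)%N ->
  \sum_(0 <= i < m * k | (i %% k == d)%N) F i = \sum_(0 <= j < m) F (d + j * k)%N.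
Proof.
move=> dk; elim: m => [|m IH]; first by rewrite mul0n !big_geq.
rewrite mulSnr (@big_cat_nat _ _ _ (m * k)%N) ?leq_addr //= IH big_nat_recr //=.
congr (_ + _).
rewrite -{1}(add0n (m * k)%N) big_addn addKn.
rewrite big_mkcond (eq_big_nat _ _ (F2 := fun i => if i == d then F (d + m * k)%N else 0)); last first.
  move=> i /andP[_ ik]; rewrite [(i + _)%N]addnC modnMDl modn_small //; case: eqP => [->|] //.
  by rewrite addnC.
rewrite -big_mkcond /= big_mkord.
rewrite (big_pred1 (Ordinal dk)) // => i; by rewrite -(inj_eq val_inj).
Qed.


Lemma modsig {R : realType} m k d j : (d < k)%N -> (j < m)%N ->
  ((d + j * k + k) %% (m * k) = d + (j.+1 %% m) * k)%N.
Proof.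
move=> dk jm; have [jm1|] := ltnP j.+1 m.
  rewrite !modn_small //; first lia.
  rewrite -addnA -mulSnr.
  have : (j.+1 * k + k <= m * k)%N by rewrite -mulSnr leq_mul2r jm1 orbT.
  lia.
move=> mj; have -> : m = j.+1 by lia.
rewrite modnn mul0n addn0 -addnA -mulSnr modnDr modn_small //.
by rewrite (leq_trans dk) // leq_pmull.
Qed.

Lemma reidxO {R : realType} n m k d (G : nat -> R) : (d < k)%N -> n = (m * k)%N ->
  \sum_(i < n | (i %% k == d)%N) G i = \sum_(j < m) G (d + j * k)%N.
Proof.
move=> dk ->; rewrite -(@big_mkord _ _ _ _ (fun i => (i %% k == d)%N) G) reidx //.
by rewrite (@big_mkord _ _ _ _ xpredT).
Qed.

Lemma P3 {R : realType} n k (d : 'I_k) (x y : 'cV[R]_n) :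
  (0 < k)%N -> (k %| n)%N -> (1 < n %/ k)%N ->
  Fform k d x y = Bform 1 (subvec k d x) (subvec k d y).
Proof.
move=> kpos kdvd m1.
set m := (n %/ k)%N.
have hn : n = (m * k)%N by rewrite divnK.
rewrite FformE BformE.
rewrite [\sum_(i < n | _) (x i 0 * y i 0) ^+ 2](eq_bigr (fun i : 'I_n => (vget x i * vget y i) ^+ 2)); last by move=> i _; rewrite !vgetE.
rewrite [\sum_(i < n | _) (x i 0 * y i 0)](eq_bigr (fun i : 'I_n => vget x i * vget y i)); last by move=> i _; rewrite !vgetE.
rewrite [\sum_(i < n | _) (x (sigma k i) 0 ^+ 2 * _)](eq_bigr (fun i : 'I_n => vget x ((i + k) %% (m * k))%N ^+ 2 * vget y i ^+ 2)); last first.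
  move=> i _; rewrite -hn vgetE; congr (_ ^+ 2 * _); exact: (esym (vgetE _ x (sigma k i))).
rewrite (reidxO _ _ _ _ (fun i => (vget x i * vget y i) ^+ 2) (ltn_ord d) hn).
rewrite (reidxO _ _ _ _ (fun i => (vget x i * vget y i)) (ltn_ord d) hn).
rewrite (reidxO _ _ _ _ (fun i => vget x ((i + k) %% (m * k))%N ^+ 2 * vget y i ^+ 2) (ltn_ord d) hn).
rewrite [in RHS](eq_bigr (fun j : 'I_m => (m.-1)%:R * (vget x (d + j * k)%N * vget y (d + j * k)%N) ^+ 2
   + vget x (d + (j.+1 %% m) * k)%N ^+ 2 * vget y (d + j * k)%N ^+ 2)); last first.
  by move=> j _; rewrite !mxE /= addn1; ring.
rewrite [X in _ = _ - X ^+ 2](eq_bigr (fun j : 'I_m => vget x (d + j * k)%N * vget y (d + j * k)%N)); last first.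
  by move=> j _; rewrite !mxE.
rewrite [\sum_(j < m) (vget x _ ^+ 2 * _)](eq_bigr (fun j : 'I_m => vget x (d + (j.+1 %% m) * k)%N ^+ 2 * vget y (d + j * k)%N ^+ 2)); last first.
  by move=> j _; rewrite modsig.
rewrite big_split /= -mulr_sumr -/m.
have -> : (m.-1)%:R = m%:R - 1 :> R by rewrite -subn1 natrB //; lia.
ring.
Qed.

Lemma SPLIT2 {R : realType} n k (kpos : (0 < k)%N) (g : 'I_n -> 'I_n -> R) :
  \sum_(i < n) \sum_(j < n | (i < j)%N && (i %% k == j %% k)%N) g i j
  = \sum_(d < k) \sum_(i < n) \sum_(j < n | [&& (i < j)%N, (i %% k == d)%N & (j %% k == d)%N]) g i j.
Proof.
rewrite (eq_bigr (fun d : 'I_k => \sum_(i < n) \sum_(j < n)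
   if [&& (i < j)%N, (i %% k == d)%N & (j %% k == d)%N] then g i j else 0)); last first.
  by move=> d _; apply: eq_bigr => i _; rewrite big_mkcond.
rewrite exchange_big; apply: eq_bigr => i _.
rewrite exchange_big big_mkcond; apply: eq_bigr => j _.
rewrite (eq_bigr (fun d : 'I_k => if (i %% k == d)%N then
   (if (i < j)%N && (i %% k == j %% k)%N then g i j else 0) else 0)); first by rewrite (SEL _ kpos).
move=> d _; case: eqP => [<-|] //=; first by rewrite [(j == i %[mod k])%N]eq_sym.
by rewrite andbF.
Qed.

Theorem proposition3 (R : realType) (n k : nat) :
  (2 < n)%N -> (0 < k)%N -> (k < n)%N -> (k %| n)%N -> (1 < n %/ k)%N ->
  [/\ (forall x y : 'cV[R]_n,
         Bform k x y =
         \sum_(d < k) Fform k d x y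
         + \sum_(i < n) \sum_(j < n | (i < j)%N && (i %% k != j %% k)%N)
              (x i 0 * y i 0 - x j 0 * y j 0) ^+ 2),
      (forall (d : 'I_k) (x y : 'cV[R]_n), 0 <= Fform k d x y)
    & (forall (d : 'I_k) (x y : 'cV[R]_n),
         Fform k d x y = Bform 1 (subvec k d x) (subvec k d y))].
Proof.
move=> n2 kpos kn kdvd m1.
have P3' := fun d x y => @P3 R n k d x y kpos kdvd m1.
split => //; last by move=> d x y; rewrite P3'; apply: Bform1_ge0.
move=> x y.
set m := (n %/ k)%N.
have hn : n = (m * k)%N by rewrite divnK.
pose a i := x i 0 * y i 0.
rewrite (eq_bigr (fun d : 'I_k => ((n %/ k)%N%:R - 1) * \sum_(i < n | (i %% k == d)%N) a i ^+ 2
     - (\sum_(i < n | (i %% k == d)%N) a i) ^+ 2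
     + \sum_(i < n | (i %% k == d)%N) x (sigma k i) 0 ^+ 2 * y i 0 ^+ 2)); last first.
  by move=> d _; rewrite FformE.
rewrite !big_split /= sumrN -mulr_sumr !(PART _ _ kpos) -/m.
have Ediff : \sum_(i < n) \sum_(j < n | (i < j)%N && (i %% k != j %% k)%N) (a i - a j) ^+ 2
  = \sum_(i < n) \sum_(j < n | [&& (i < j)%N, true & true]) (a i - a j) ^+ 2
    - \sum_(i < n) \sum_(j < n | (i < j)%N && (i %% k == j %% k)%N) (a i - a j) ^+ 2.
  rewrite -sumrB; apply: eq_bigr => i _.
  rewrite [X in _ = X - _](eq_bigl (fun j : 'I_n => (i < j)%N)); last by move=> j; rewrite /= ?andbT.
  rewrite [X in _ = X - _](bigID (fun j : 'I_n => (i %% k == j %% k)%N)) /=.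
  by rewrite [X in _ = X - _]addrC addrK.
rewrite Ediff (PAIR _ xpredT) SPLIT2 //.
rewrite [\sum_(d < k) \sum_(i < n) \sum_(j < n | _) _](eq_bigr (fun d : 'I_k => m%:R * \sum_(i < n | (i %% k == d)%N) a i ^+ 2
   - (\sum_(i < n | (i %% k == d)%N) a i) ^+ 2)); last first.
  move=> d _; have := PAIR n (fun i : 'I_n => (i %% k == d)%N) a; rewrite /= => ->.
  by rewrite (reidxO _ _ _ _ (fun _ => 1) (ltn_ord d) hn) sumr_const card_ord.
rewrite sumrB -mulr_sumr (PART _ _ kpos) sumr_const card_ord.
rewrite BformE.
rewrite (eq_bigr (fun i : 'I_n => (n.-1)%:R * a i ^+ 2 + x (sigma k i) 0 ^+ 2 * y i 0 ^+ 2)); last first.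
  by move=> i _; rewrite /a; ring.
rewrite big_split /= -mulr_sumr.
have -> : (n.-1)%:R = n%:R - 1 :> R by rewrite -subn1 natrB //; lia.
rewrite /a; ring.
Qed.
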